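(* Let $R$ be a System F type (possibly containing the type variable $X$ free) with $X\in^+R$, and let $\gamma$ be an environment defined on the free type variables of $D_{\mathrm{param}}$. Then $\mathit{rebuild}_{X,R}\ \llbracket D_{\mathrm{param}}\to D_{\mathrm{param}}\rrbracket_\gamma\ I$.
   Context: Terms are those of the pure untyped $\lambda$-calculus, up to $\alpha$-equivalence; $=_{\beta\eta}$ is $\beta\eta$-convertibility. System F types $T ::= X\mid T\to T'\mid\forall X.T$. A relation on terms is $\beta\eta$-closed if closed under replacing either related term by a $\beta\eta$-equal one; $\mathcal{R}$ is the set of such relations; environments $\gamma$ map finitely many type variables to $\mathcal{R}$. Interpretation: $\llbracket X\rrbracket_\gamma=\gamma(X)$; $t\,\llbracket T\to T'\rrbracket_\gamma\,t'$ iff for all $a,a'$ with $a\,\llbracket T\rrbracket_\gamma\,a'$, $t\,a\,\llbracket T'\rrbracket_\gamma\,t'\,a'$; $\llbracket \forall X.T\rrbracket_\gamma=\bigcap_{r\in\mathcal{R}}\llbracket T\rrbracket_{\gamma[X\mapsto r]}$. $X\in^pT$ (polarities $p\in\{+,-\}$, $\bar p$ the other): $X\in^+X$; $X\in^pY$ for variables $Y\ne X$; $X\in^p(T\to T')$ iff $X\in^{\bar p}T$ and $X\in^pT'$; $X\in^p\forall Y.T$ iff $X\in^pT$. Terms: $I:=\lambda x.x$, $K:=\lambda x.\lambda y.x$, $t\circ t':=\lambda x.t\,(t'\,x)$. $\mathit{fmap}_{X,R}$ is defined by recursion on $R$: $\mathit{fmap}_{X,X}=I$; $\mathit{fmap}_{X,Y}=K\,I$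 ($Y\ne X$); $\mathit{fmap}_{X,R\to R'}=\lambda f.\lambda a.\,\mathit{fmap}_{X,R'}\,f\circ a\circ\mathit{fmap}_{X,R}\,f$; $\mathit{fmap}_{X,\forall Y.R}=\lambda f.\,\mathit{fmap}_{X,R}\,f$ (bound variable chosen different from $X$). $\mathit{fold}:=\lambda a.\lambda x.x\,a$; $\mathit{in}_{X,R}:=\lambda x.\lambda a.\,a\,(\mathit{fmap}_{X,R}\,(\mathit{fold}\,a)\,x)$; $\mathit{rebuild}_{X,R}:=\mathit{fold}\ \mathit{in}_{X,R}$; $D_{\mathrm{param}}:=\forall X.(R\to X)\to X$. *)

(* Defs.v *)
From Stdlib Require Import Arith Relations.

Inductive term : Type :=
| Var : nat -> term
| App : term -> term -> term
| Lam : term -> term.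

Fixpoint lift (c : nat) (t : term) : term :=
  match t with
  | Var n => if n <? c then Var n else Var (S n)
  | App t1 t2 => App (lift c t1) (lift c t2)
  | Lam t1 => Lam (lift (S c) t1)
  end.

Fixpoint liftn (k : nat) (t : term) : term :=
  match k with 0 => t | S k' => lift 0 (liftn k' t) end.

(* substitute u for variable k in t (u lives outside the k binders) *)
Fixpoint subst (k : nat) (u : term) (t : term) : term :=
  match t with
  | Var n => if n <? k then Var n
             else if n =? k then liftn k u
             else Var (pred n)
  | App t1 t2 => App (subst k u t1) (subst k u t2)
  | Lam t1 => Lam (subst (S k) u t1)
  end.

Inductive step : term -> term -> Prop :=
| step_beta : forall t u, step (App (Lam t) u) (subst 0 u t)
| step_eta : forall t, step (Lam (App (lift 0 t) (Var 0))) t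
| step_appl : forall t t' u, step t t' -> step (App t u) (App t' u)
| step_appr : forall t u u', step u u' -> step (App t u) (App t u')
| step_lam : forall t t', step t t' -> step (Lam t) (Lam t').

Definition beq : term -> term -> Prop := clos_refl_sym_trans term step.

Definition trel := term -> term -> Prop.

Definition be_closed (r : trel) : Prop :=
  forall t1 t2 t1' t2', beq t1 t1' -> beq t2 t2' -> r t1 t2 -> r t1' t2'.

Definition env := nat -> option trel.

Definition env_update (g : env) (X : nat) (r : trel) : env :=
  fun Y => if Y =? X then Some r else g Y.

Inductive ty : Type :=
| TVar : nat -> ty
| TArr : ty -> ty -> ty
| TAll : nat -> ty -> ty.

Fixpoint ftv (Y : nat) (T : ty) : Prop :=
  match T with
  | TVar Z => Z = Y
  | TArr T1 T2 => ftv Y T1 \/ ftv Y T2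
  | TAll Z T1 => Z <> Y /\ ftv Y T1
  end.

(* relational interpretation; an undefined variable gets the empty relation
   (irrelevant when the environment covers the free variables) *)
Fixpoint interp (g : env) (T : ty) : trel :=
  match T with
  | TVar Y => match g Y with Some r => r | None => fun _ _ => False end
  | TArr T1 T2 => fun t t' =>
      forall a a', interp g T1 a a' -> interp g T2 (App t a) (App t' a')
  | TAll Y T1 => fun t t' =>
      forall r, be_closed r -> interp (env_update g Y r) T1 t t'
  end.

(* polarity: occ X true T  is  X \in^+ T,  occ X false T  is  X \in^- T.
   A binder rebinding X makes X not occur free (alpha-renaming convention). *)
Fixpoint occ (X : nat) (p : bool) (T : ty) : Prop :=
  match T with
  | TVar Y => if Y =? X then p = true else True
  | TArr T1 T2 => occ X (negb p) T1 /\ occ X p T2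
  | TAll Y T1 => if Y =? X then True else occ X p T1
  end.

Definition tI : term := Lam (Var 0).
Definition tK : term := Lam (Lam (Var 1)).
Definition comp (t t' : term) : term :=
  Lam (App (lift 0 t) (App (lift 0 t') (Var 0))).

(* fmap_{X,R}; for a binder Y = X (so X not free; in the paper the bound
   variable is renamed away from X) we use the X-free value K I. *)
Fixpoint fmap (X : nat) (R : ty) : term :=
  match R with
  | TVar Y => if Y =? X then tI else App tK tI
  | TArr R1 R2 =>
      Lam (Lam (comp (App (liftn 2 (fmap X R2)) (Var 1))
                     (comp (Var 0) (App (liftn 2 (fmap X R1)) (Var 1)))))
  | TAll Y R1 =>
      if Y =? X then App tK tI
      else Lam (App (liftn 1 (fmap X R1)) (Var 0))
  end.

Definition tfold : term := Lam (Lam (App (Var 0) (Var 1))).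

(* in_{X,R} := \x.\a. a (fmap_{X,R} (fold a) x) *)
Definition tin (X : nat) (R : ty) : term :=
  Lam (Lam (App (Var 0)
                (App (App (liftn 2 (fmap X R)) (App tfold (Var 0))) (Var 1)))).

Definition rebuild (X : nat) (R : ty) : term := App tfold (tin X R).

Definition Dparam (X : nat) (R : ty) : ty :=
  TAll X (TArr (TArr R (TVar X)) (TVar X)).

(* Main.v *)
Require Import Defs.
From Stdlib Require Import Arith Relations Lia FunctionalExtensionality.

Lemma beq_refl t : beq t t. Proof. apply rst_refl. Qed.
Lemma beq_sym t u : beq t u -> beq u t. Proof. apply rst_sym. Qed.
Lemma beq_trans t u v : beq t u -> beq u v -> beq t v. Proof. apply rst_trans. Qed.
Lemma beq_step t u : step t u -> beq t u. Proof. apply rst_step. Qed.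
Lemma beq_appl t t' u : beq t t' -> beq (App t u) (App t' u).
Proof. induction 1; [apply beq_step; constructor; auto|apply beq_refl|apply beq_sym; auto|eapply beq_trans; eauto]. Qed.
Lemma beq_appr t u u' : beq u u' -> beq (App t u) (App t u').
Proof. induction 1; [apply beq_step; constructor; auto|apply beq_refl|apply beq_sym; auto|eapply beq_trans; eauto]. Qed.
Lemma beq_lam t t' : beq t t' -> beq (Lam t) (Lam t').
Proof. induction 1; [apply beq_step; constructor; auto|apply beq_refl|apply beq_sym; auto|eapply beq_trans; eauto]. Qed.
Lemma beta_beq t u v : subst 0 u t = v -> beq (App (Lam t) u) v.
Proof. intros <-. apply beq_step, step_beta. Qed.

Fixpoint cl (n : nat) (t : term) : Prop :=
  match t with Var m => m < n | App a b => cl n a /\ cl n b | Lam a => cl (S n) a end.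

Lemma cl_mono t : forall n m, cl n t -> n <= m -> cl m t.
Proof. induction t; simpl; intros n0 m H Hle; try lia; [destruct H; split; eauto|]. apply (IHt (S n0)); auto; lia. Qed.

Lemma lift_cl t : forall n c, cl n t -> n <= c -> lift c t = t.
Proof.
  induction t; simpl; intros.
  - destruct (Nat.ltb_spec n c); auto; lia.
  - destruct H; rewrite (IHt1 n c), (IHt2 n c); auto.
  - rewrite (IHt (S n) (S c)); auto; lia.
Qed.

Lemma subst_cl t : forall n k u, cl n t -> n <= k -> subst k u t = t.
Proof.
  induction t; simpl; intros.
  - destruct (Nat.ltb_spec n k); auto; lia.
  - destruct H; rewrite (IHt1 n k u), (IHt2 n k u); auto.
  - rewrite (IHt (S n) (S k)); auto; lia.
Qed.

Lemma liftn_cl t k : cl 0 t -> liftn k t = t.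
Proof. intros H; induction k; simpl; auto. rewrite IHk. apply (lift_cl _ 0); auto; lia. Qed.

Lemma lift_lift t : forall c c', c' <= c -> lift (S c) (lift c' t) = lift c' (lift c t).
Proof.
  induction t; simpl; intros.
  - destruct (Nat.ltb_spec n c'); destruct (Nat.ltb_spec n c); simpl;
    repeat match goal with |- context [?a <? ?b] => destruct (Nat.ltb_spec a b) end; auto; lia.
  - rewrite IHt1, IHt2; auto.
  - rewrite IHt; auto; lia.
Qed.

Lemma lift_liftn u : forall k c, c <= k -> lift c (liftn k u) = liftn (S k) u.
Proof.
  induction k; intros c Hc; simpl.
  - assert (c = 0) by lia; subst; reflexivity.
  - destruct c; auto. rewrite lift_lift by lia. rewrite IHk by lia. reflexivity.
Qed.

Ltac cmp := repeat (simpl; match goal with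
  | |- context [?a <? ?b] => destruct (Nat.ltb_spec a b)
  | |- context [?a =? ?b] => destruct (Nat.eqb_spec a b)
  | |- context [match ?k with 0 => _ | S _ => _ end] => destruct k
  end); try (exfalso; lia).

Lemma subst_lift t : forall k u, subst k u (lift k t) = t.
Proof.
  induction t; simpl; intros.
  - cmp; auto.
  - rewrite IHt1, IHt2; auto.
  - rewrite IHt; auto.
Qed.

Lemma subst_lift_comm t : forall k c u, c <= k -> subst (S k) u (lift c t) = lift c (subst k u t).
Proof.
  induction t; simpl; intros.
  - destruct (Nat.ltb_spec n c).
    + cmp; auto.
    + destruct (Nat.eqb_spec n k).
      * subst. cmp. rewrite (lift_liftn u k c) by lia. reflexivity.
      * cmp; auto. destruct n; try lia. simpl. cmp; auto.
  - rewrite IHt1, IHt2; auto.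
  - rewrite IHt; auto; lia.
Qed.

Lemma fmap_cl X R : cl 0 (fmap X R).
Proof.
  induction R; simpl.
  - destruct (n =? X); simpl; lia.
  - unfold comp; simpl.
    rewrite ?(lift_cl (fmap X R1) 0), ?(lift_cl (fmap X R2) 0) by (auto; lia).
    repeat split; try lia; apply (cl_mono _ 0); auto; lia.
  - destruct (n =? X); simpl; try lia.
    rewrite ?(lift_cl (fmap X R) 0) by (auto; lia). split; try lia. apply (cl_mono _ 0); auto; lia.
Qed.

Lemma fm_lift X R c : lift c (fmap X R) = fmap X R.
Proof. apply (lift_cl _ 0); [apply fmap_cl|lia]. Qed.
Lemma fm_subst X R k u : subst k u (fmap X R) = fmap X R.
Proof. apply (subst_cl _ 0); [apply fmap_cl|lia]. Qed.

Lemma fmap_arr_eq X R1 R2 : fmap X (TArr R1 R2) =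
  Lam (Lam (Lam (App (App (fmap X R2) (Var 2))
     (App (Lam (App (Var 2) (App (App (fmap X R1) (Var 3)) (Var 0)))) (Var 0))))).
Proof. unfold fmap at 1; fold fmap. unfold comp; simpl. rewrite !fm_lift. reflexivity. Qed.

Lemma fmap_arr_beq X R1 R2 fn a b :
  beq (App (App (App (fmap X (TArr R1 R2)) fn) a) b)
      (App (App (fmap X R2) fn) (App a (App (App (fmap X R1) fn) b))).
Proof.
  rewrite fmap_arr_eq.
  eapply beq_trans.
  { apply beq_appl, beq_appl, beq_appl, beq_lam, beq_lam, beq_lam, beq_appr.
    apply beta_beq. simpl. rewrite fm_subst. reflexivity. }
  eapply beq_trans. { apply beq_appl, beq_appl, beta_beq. reflexivity. }
  eapply beq_trans. { apply beq_appl, beta_beq. reflexivity. }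
  apply beta_beq. simpl. rewrite !fm_subst.
  rewrite subst_lift_comm by lia. rewrite !subst_lift. reflexivity.
Qed.

Definition env_ok (g : env) := forall Y r, g Y = Some r -> be_closed r.

Lemma env_ok_upd g X r : env_ok g -> be_closed r -> env_ok (env_update g X r).
Proof. unfold env_ok, env_update; intros Hg Hr Y r'. destruct (Y =? X); eauto. intro E; injection E; intros <-; auto. Qed.

Lemma interp_closed T : forall g, env_ok g -> be_closed (interp g T).
Proof.
  induction T; simpl; intros g Hg.
  - destruct (g n) eqn:E; [eapply Hg; eauto|]. intros ? ? ? ? ? ? [].
  - intros t1 t2 t1' t2' H1 H2 H a a' Ha.
    eapply IHT2; [auto| apply beq_appl; eauto | apply beq_appl; eauto | auto].
  - intros t1 t2 t1' t2' H1 H2 H r Hr.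
    eapply IHT; [apply env_ok_upd; auto|eauto|eauto|auto].
Qed.

Lemma upd_same g X a b : env_update (env_update g X a) X b = env_update g X b.
Proof. apply functional_extensionality; intro Y; unfold env_update. destruct (Y =? X); auto. Qed.

Lemma upd_comm g X Y a b : Y <> X ->
  env_update (env_update g X a) Y b = env_update (env_update g Y b) X a.
Proof.
  intro H; apply functional_extensionality; intro Z; unfold env_update.
  destruct (Nat.eqb_spec Z Y); destruct (Nat.eqb_spec Z X); auto; exfalso; lia.
Qed.

Lemma upd_at g X r : env_update g X r X = Some r.
Proof. unfold env_update. rewrite Nat.eqb_refl. auto. Qed.

Lemma KI_beq fn a : beq (App (App (App tK tI) fn) a) a.
Proof.
  eapply beq_trans. { apply beq_appl, beq_appl, beta_beq. reflexivity. }
  eapply beq_trans. { apply beq_appl, beta_beq. reflexivity. }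
  apply beta_beq. reflexivity.
Qed.

Lemma fmap_rel X S r fn (HS : be_closed S) (Hr : be_closed r)
  (H1 : forall x y, S x y -> r (App fn x) y)
  (H2 : forall x y, r (App fn x) y -> S x y) R :
  forall g, env_ok g ->
  (occ X true R -> forall a a', interp (env_update g X S) R a a' ->
      interp (env_update g X r) R (App (App (fmap X R) fn) a) a') /\
  (occ X false R -> forall a a', interp (env_update g X r) R a a' ->
      interp (env_update g X S) R (App (App (fmap X R) fn) a) a').
Proof.
  induction R as [Y|R1 IH1 R2 IH2|Y R1 IH]; intros g Hg.
  - simpl. destruct (Nat.eqb_spec Y X).
    + subst. rewrite !upd_at. split; intros Ho a a' Ha; [|discriminate].
      eapply Hr; [apply beq_sym, beq_appl, beta_beq; reflexivity|apply beq_refl|auto].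
    + unfold env_update. destruct (Nat.eqb_spec Y X); [congruence|].
      split; intros Ho a a' Ha;
      (eapply interp_closed with (T := TVar Y); [eauto|apply beq_sym, KI_beq|apply beq_refl|exact Ha]).
  - simpl occ. split; intros [Ho1 Ho2] a a' Ha; simpl; intros b b' Hb.
    + eapply interp_closed; [apply env_ok_upd; eauto|apply beq_sym, fmap_arr_beq|apply beq_refl|].
      apply (proj1 (IH2 g Hg) Ho2). apply Ha. apply (proj2 (IH1 g Hg) Ho1). auto.
    + eapply interp_closed; [apply env_ok_upd; eauto|apply beq_sym, fmap_arr_beq|apply beq_refl|].
      apply (proj2 (IH2 g Hg) Ho2). apply Ha. apply (proj1 (IH1 g Hg) Ho1). auto.
  - simpl occ. simpl fmap. destruct (Nat.eqb_spec Y X).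
    + subst. split; intros _ a a' Ha;
      (eapply interp_closed; [apply env_ok_upd; eauto|apply beq_sym, KI_beq|apply beq_refl|]);
      simpl in *; intros r' Hr'; specialize (Ha r' Hr'); rewrite upd_same in Ha |- *; exact Ha.
    + assert (Hb : forall a, beq (App (App (Lam (App (liftn 1 (fmap X R1)) (Var 0))) fn) a)
                                 (App (App (fmap X R1) fn) a)).
      { intro a. apply beq_appl, beta_beq. simpl. rewrite subst_lift. reflexivity. }
      split; intros Ho a a' Ha;
      (eapply interp_closed; [apply env_ok_upd; eauto|apply beq_sym, Hb|apply beq_refl|]);
      simpl in *; intros r' Hr'; rewrite upd_comm by auto; specialize (Ha r' Hr');
      rewrite upd_comm in Ha by auto; apply IH; auto; apply env_ok_upd; auto.
Qed.

Lemma fold_beq f x : beq (App (App tfold f) x) (App x f).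
Proof.
  eapply beq_trans. { apply beq_appl, beta_beq. reflexivity. }
  apply beta_beq. simpl. rewrite subst_lift. reflexivity.
Qed.

Lemma tin_beq X R a f :
  beq (App (App (tin X R) a) f) (App f (App (App (fmap X R) (App tfold f)) a)).
Proof.
  unfold tin. rewrite liftn_cl by apply fmap_cl.
  eapply beq_trans. { apply beq_appl, beta_beq. reflexivity. }
  apply beta_beq. simpl. rewrite !fm_subst, subst_lift. reflexivity.
Qed.

Theorem mainTheorem10 (X : nat) (R : ty) (g : env) :
  occ X true R ->
  (forall Y r, g Y = Some r -> be_closed r) ->
  (exists N, forall Y, N <= Y -> g Y = None) ->
  (forall Y, ftv Y (Dparam X R) -> g Y <> None) ->
  interp g (TArr (Dparam X R) (Dparam X R)) (rebuild X R) tI.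
Proof.
  intros Hocc Hg _ _ d d' Hd.
  assert (Hg' : env_ok g) by exact Hg.
  eapply interp_closed; [exact Hg'| |apply beq_sym, beta_beq; reflexivity|].
  { apply beq_sym. unfold rebuild. apply fold_beq. }
  unfold Dparam. simpl. intros r Hr f f' Hf.
  rewrite upd_at.
  set (S := fun x y => r (App x f) y).
  assert (HS : be_closed S).
  { intros t1 t2 t1' t2' E1 E2 H. unfold S in *. eapply Hr; [apply beq_appl; eauto|eauto|auto]. }
  assert (HSr1 : forall x y, S x y -> r (App (App tfold f) x) y).
  { intros x y H. eapply Hr; [apply beq_sym, fold_beq|apply beq_refl|exact H]. }
  assert (HSr2 : forall x y, r (App (App tfold f) x) y -> S x y).
  { intros x y H. eapply Hr; [apply fold_beq|apply beq_refl|exact H]. }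
  specialize (Hd S HS). simpl in Hd. rewrite upd_at in Hd.
  apply (Hd (tin X R) f').
  intros a a' Ha. unfold S.
  eapply Hr; [apply beq_sym, tin_beq|apply beq_refl|].
  simpl in Hf. rewrite upd_at in Hf. apply Hf.
  apply (proj1 (fmap_rel X S r (App tfold f) HS Hr HSr1 HSr2 R g Hg') Hocc). exact Ha.
Qed.
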